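(* For every $n\ge4$ and $2\le k\le n-2$, $\rho_{n,k}(\gamma):=\mathcal E_\gamma^{\otimes n}(|D_n^k\rangle\langle D_n^k|)\notin\mathcal S$ for all $0\le\gamma<1$, while $\rho_{n,k}(1)=|0^n\rangle\langle0^n|\in\mathcal S$.
   Context: $|D_n^k\rangle=\binom nk^{-1/2}\sum_{x\in\{0,1\}^n,|x|=k}|x\rangle$ is the Dicke state ($|x|$ the Hamming weight). $\mathcal E_\gamma$ is single-qubit amplitude damping with Kraus operators $|0\rangle\langle0|+\sqrt{1-\gamma}|1\rangle\langle1|$ and $\sqrt\gamma|0\rangle\langle1|$. $\mathcal S$ is the $n$-qubit stabilizer polytope (convex hull of pure stabilizer states $C|0^n\rangle$, $C$ Clifford). *)

(* Defs.v *)
From mathcomp Require Import all_boot all_algebra.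
From mathcomp Require Import reals.
From mathcomp Require Export complex.
Set Implicit Arguments. Unset Strict Implicit. Unset Printing Implicit Defensive.
Import GRing.Theory Num.Theory.
Local Open Scope ring_scope.

Section QInfo.
Variable R : realType.
Local Notation C := R[i].

Definition cR (r : R) : C := Complex r 0.
Definition cc (z : C) : C := conjc z.
Definition iC : C := Complex 0 1.

(* computational basis of n qubits: bit strings x : 'I_n -> bool *)
Definition bits (n : nat) := {ffun 'I_n -> bool}.

(* operators on (C^2)^{\otimes n}, given by their matrix entries <x|A|y> *)
Definition op (n : nat) := bits n -> bits n -> C.
Definition ket (n : nat) := bits n -> C.

Definition proj n (psi : ket n) : op n := fun x y => psi x * cc (psi y).

Definition hweight n (x : bits n) : nat := #|[set i | x i]|.

Definition dicke (n k : nat) : ket n :=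
  fun x => if hweight x == k then cR (Num.sqrt ('C(n, k)%:R)^-1) else 0.
Arguments dicke : clear implicits.

Definition zeros n : bits n := [ffun => false].
Arguments zeros : clear implicits.
Definition basis_ket n (z : bits n) : ket n := fun x => if x == z then 1 else 0.

(* amplitude damping Kraus operators (single qubit, entry <a|K|b>, false = 0):
   K0 = |0><0| + sqrt(1-g)|1><1|,  K1 = sqrt(g) |0><1| *)
Definition ad_K0 (g : R) (a b : bool) : C :=
  match a, b with
  | false, false => 1
  | true, true => cR (Num.sqrt (1 - g))
  | _, _ => 0
  end.
Definition ad_K1 (g : R) (a b : bool) : C :=
  match a, b with
  | false, true => cR (Num.sqrt g)
  | _, _ => 0
  end.
Definition ad_kraus (g : R) (j : bool) : bool -> bool -> C :=
  if j then ad_K1 g else ad_K0 g.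

Definition ad_kraus_n n (g : R) (j : bits n) : op n :=
  fun x y => \prod_(i < n) ad_kraus g (j i) (x i) (y i).

Definition ad_channel_n n (g : R) (rho : op n) : op n :=
  fun x y => \sum_(j : bits n) \sum_(u : bits n) \sum_(v : bits n)
     ad_kraus_n g j x u * rho u v * cc (ad_kraus_n g j y v).

Definition rho_nk (n k : nat) (g : R) : op n := ad_channel_n g (proj (dicke n k)).

(* single-qubit Paulis I, X, Y, Z indexed by 'I_4 *)
Definition pauli1 (p : 'I_4) (a b : bool) : C :=
  match val p with
  | 0 => if a == b then 1 else 0
  | 1 => if a != b then 1 else 0
  | 2 => if a == b then 0 else (if b then - iC else iC)
  | _ => if a == b then (if a then -1 else 1) else 0
  end.

Definition pauli_string n (p : {ffun 'I_n -> 'I_4}) : op n :=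
  fun x y => \prod_(i < n) pauli1 (p i) (x i) (y i).

Definition op_mul n (A B : op n) : op n := fun x y => \sum_(z : bits n) A x z * B z y.
Definition op_adj n (A : op n) : op n := fun x y => cc (A y x).
Definition op_id n : op n := fun x y => if x == y then 1 else 0.
Arguments op_id : clear implicits.

Definition unitary n (U : op n) : Prop := op_mul U (op_adj U) = op_id n.

Definition clifford n (U : op n) : Prop :=
  unitary U /\
  forall p : {ffun 'I_n -> 'I_4}, exists (q : {ffun 'I_n -> 'I_4}) (m : 'I_4),
    op_mul (op_mul U (pauli_string p)) (op_adj U)
    = (fun x y => iC ^+ m * pauli_string q x y).

Definition stab_ket n (U : op n) : ket n := fun x => U x (zeros n).

Definition stab_polytope n (rho : op n) : Prop :=
  exists (m : nat) (w : 'I_m -> R) (U : 'I_m -> op n),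
    (forall j, 0 <= w j) /\ \sum_(j < m) w j = 1 /\
    (forall j, clifford (U j)) /\
    rho = (fun x y => \sum_(j < m) cR (w j) * proj (stab_ket (U j)) x y).

End QInfo.
Arguments rho_nk {R} n k g _ _.
Arguments basis_ket {R n} z _.
Arguments proj {R n} psi _ _.

(* Main.v *)
Require Import Defs.
From mathcomp Require Import all_boot all_algebra.
From mathcomp Require Import reals complex.
From mathcomp Require Import order ring zify.
From Stdlib Require Import FunctionalExtensionality.
Import Order.TTheory GRing.Theory Num.Theory.
Local Open Scope ring_scope.
Set Implicit Arguments. Unset Strict Implicit.

Lemma sum_enum (R : realType) (T : finType) (F : T -> R[i]) :
  \sum_(z : T) F z = \sum_(l < #|T|) F (enum_val l).
Proof.
rewrite (reindex (@enum_val T predT)) //=.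
by exists enum_rank => x _; rewrite ?enum_valK ?enum_rankK.
Qed.

Lemma unitary_left (R : realType) n (U : op R n) : unitary U ->
  forall a b, \sum_w cc (U w a) * U w b = if a == b then 1 else 0.
Proof.
rewrite /unitary => HU a b.
pose A : 'M[R[i]]_#|bits n| := \matrix_(i, j) U (enum_val i) (enum_val j).
pose B : 'M[R[i]]_#|bits n| := \matrix_(i, j) cc (U (enum_val j) (enum_val i)).
have AB : A *m B = 1%:M.
  apply/matrixP => i j; rewrite !mxE.
  under eq_bigr do rewrite !mxE.
  rewrite -(sum_enum (fun z => U (enum_val i) z * cc (U (enum_val j) z))).
  have := congr1 (fun f : op R n => f (enum_val i) (enum_val j)) HU.
  rewrite /op_mul /op_adj /op_id /= => ->.
  rewrite (inj_eq enum_val_inj). by case: (i == j).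
have /matrixP /(_ (enum_rank a) (enum_rank b)) := mulmx1C AB.
rewrite !mxE; under eq_bigr do rewrite !mxE.
rewrite -(sum_enum (fun z => cc (U z (enum_val (enum_rank a))) * U z (enum_val (enum_rank b)))).
rewrite !enum_rankK (inj_eq enum_rank_inj). by case: (a == b).
Qed.

Lemma prod_neq0_each (R : realType) n (F : 'I_n -> R[i]) :
  \prod_i F i != 0 -> forall i, F i != 0.
Proof.
move=> H i; apply/negP => /eqP Fi; move/negP: H; apply.
by rewrite (bigD1 i) //= Fi mul0r.
Qed.

Lemma sum_neq0_ex (R : realType) (T : finType) (F : T -> R[i]) :
  \sum_t F t != 0 -> exists t, F t != 0.
Proof.
move=> H; case: (pickP (fun t => F t != 0)) => [t Ht | H0]; first by exists t.
move/negP: H; case; apply/eqP; apply: big1 => t _.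
by move: (H0 t) => /= /negbFE /eqP.
Qed.

Lemma sum_delta (R : realType) (T : finType) (F : T -> R[i]) c :
  \sum_a F a * (if a == c then 1 else 0) = F c.
Proof.
rewrite (bigD1 c) //= eqxx mulr1 big1 ?addr0 // => a /negPf ->.
by rewrite mulr0.
Qed.

Lemma iC_neq0 (R : realType) : iC R != 0.
Proof. by rewrite /iC eq_complex /= oner_eq0 andbF. Qed.

Lemma pauli1_neq0 (R : realType) (p : 'I_4) a b :
  (pauli1 R p a b != 0) = ((a != b) == ((val p == 1%N) || (val p == 2%N))).
Proof.
have hi := iC_neq0 R.
case: p => [[|[|[|[|p]]]] Hp] //=; rewrite /pauli1 /=; case: a; case: b => //=;
  rewrite ?oner_eq0 ?eqxx ?oppr_eq0 ?hi //.
all: by rewrite ?oner_neq0.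
Qed.

Definition zp n (f : {ffun 'I_n -> bool}) : {ffun 'I_n -> 'I_4} :=
  [ffun i => if f i then (@Ordinal 4 3 isT) else (@Ordinal 4 0 isT)].

Definition dz n (a : bits n) (R : realType) : R[i] := if a == zeros n then 1 else 0.

Lemma zero_expand (R : realType) n (a b : bits n) :
  (2 : R[i]) ^+ n * (dz a R * dz b R) =
  \sum_(f : {ffun 'I_n -> bool}) pauli_string R (zp f) a b.
Proof.
rewrite /pauli_string.
under eq_bigr do under eq_bigr do rewrite /zp ffunE.
rewrite -(bigA_distr_bigA (fun i (t : bool) =>
   pauli1 R (if t then (@Ordinal 4 3 isT) else (@Ordinal 4 0 isT)) (a i) (b i))) /=.
under eq_bigr do rewrite big_bool /=.
have E : forall i, pauli1 R (@Ordinal 4 3 isT) (a i) (b i) + pauli1 R (@Ordinal 4 0 isT) (a i) (b i)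
   = 2 * (if (a i == false) && (b i == false) then 1 else 0).
  move=> i; rewrite /pauli1 /=.
  case: (a i); case: (b i) => /=; rewrite ?mulr0 ?mulr1 ?addr0 ?add0r ?addNr //.
rewrite (eq_bigr _ (fun i _ => E i)).
rewrite prodrMl card_ord; congr (_ * _).
rewrite /dz.
case: (boolP (a == zeros n)) => [/eqP -> | Ha].
- case: (boolP (b == zeros n)) => [/eqP -> | Hb].
  + by rewrite mulr1 big1 // => i _; rewrite /zeros ffunE.
  + rewrite mulr0; have [i Hi] : exists i, b i != false.
      case: (pickP (fun i => b i != false)) => [i Hi | H0]; first by exists i.
      move/negP: Hb; case; apply/eqP/ffunP => i; rewrite /zeros ffunE.
      by move: (H0 i) => /= /negbFE /eqP.
    by rewrite (bigD1 i) //= (negPf Hi) andbF mul0r.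
- rewrite mul0r; have [i Hi] : exists i, a i != false.
    case: (pickP (fun i => a i != false)) => [i Hi | H0]; first by exists i.
    move/negP: Ha; case; apply/eqP/ffunP => i; rewrite /zeros ffunE.
    by move: (H0 i) => /= /negbFE /eqP.
  by rewrite (bigD1 i) //= (negPf Hi) mul0r.
Qed.

Lemma pauli_zp_zero (R : realType) n (f : {ffun 'I_n -> bool}) (a : bits n) :
  pauli_string R (zp f) a (zeros n) = if a == zeros n then 1 else 0.
Proof.
rewrite /pauli_string; case: eqP => [->|Ha].
  by apply: big1 => i _; rewrite /zp /zeros !ffunE; case: (f i).
have [i Hi] : exists i, a i != false.
  case: (pickP (fun i => a i != false)) => [i Hi | H0]; first by exists i.
  case: Ha; apply/ffunP => i; rewrite /zeros ffunE.
  by move: (H0 i) => /= /negbFE /eqP.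
rewrite (bigD1 i) //= /zp /zeros !ffunE; move: Hi; case: (a i) => // _.
by case: (f i); rewrite /pauli1 /= mul0r.
Qed.

Lemma stab_contra (R : realType) n (U : op R n) (x y z : bits n) :
  clifford U ->
  stab_ket U x != 0 -> stab_ket U y != 0 -> stab_ket U z != 0 ->
  stab_ket U [ffun i => z i (+) x i (+) y i] != 0.
Proof.
move=> [HU HC] sx sy sz.
set s := stab_ket U.
pose G f := op_mul (op_mul U (pauli_string R (zp f))) (op_adj U).
have E1 : forall a b : bits n, \sum_f pauli_string R (zp f) a b = 2^+n * (dz a R * dz b R).
  by move=> a b; rewrite zero_expand.
have key : 2^+n * (s x * cc (s y)) = \sum_f G f x y.
  rewrite /G /op_mul /op_adj /=.
  under eq_bigr do under eq_bigr do rewrite big_distrl /=.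
  rewrite exchange_big /=.
  under eq_bigr do rewrite exchange_big /=.
  under eq_bigr do under eq_bigr do rewrite -big_distrl -mulr_sumr /= E1.
  rewrite (bigD1 (zeros n)) //= [X in _ + X]big1 ?addr0; last first.
    move=> b /negPf Hb; apply: big1 => a _; rewrite /dz Hb.
    by rewrite !mulr0 mul0r.
  rewrite (bigD1 (zeros n)) //= [X in _ + X]big1 ?addr0; last first.
    move=> a /negPf Ha; rewrite /dz Ha.
    by rewrite !mul0r !mulr0 mul0r.
  rewrite /dz eqxx /s /stab_ket; ring.
have [f Hf] : exists f, G f x y != 0.
  apply: sum_neq0_ex; rewrite -key mulf_neq0 //.
    by rewrite expf_neq0 // pnatr_eq0.
  by rewrite mulf_neq0 // /cc conjc_eq0.
have [q [m Hq]] := HC (zp f).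
have Pxy : pauli_string R q x y != 0.
  move: Hf; rewrite /G Hq; apply: contraNneq => ->; by rewrite mulr0.
have gs : \sum_w G f z w * s w = s z.
  rewrite /G /op_mul /op_adj /s /stab_ket.
  under eq_bigr do rewrite big_distrl /=.
  rewrite exchange_big /=.
  under eq_bigr do (under eq_bigr do rewrite -mulrA; rewrite -mulr_sumr unitary_left //).
  rewrite sum_delta.
  under eq_bigr do rewrite pauli_zp_zero.
  by rewrite sum_delta.
move: gs; rewrite /G Hq /= => gs.
apply/negP => /eqP sw0; move/negP: sz; apply; apply/eqP.
transitivity (s z); first by []. rewrite -gs; apply: big1 => w _.
case: (boolP (pauli_string R q z w == 0)) => [/eqP -> | Pzw].
  by rewrite mulr0 mul0r.
suff -> : w = [ffun i => z i (+) x i (+) y i] by rewrite sw0 mulr0.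
apply/ffunP => i; rewrite ffunE.
have h1 := prod_neq0_each Pzw i; have h2 := prod_neq0_each Pxy i.
rewrite pauli1_neq0 in h1; rewrite pauli1_neq0 in h2.
move: h1 h2; case: (_ || _); case: (z i); case: (w i); case: (x i); case: (y i) => //.
Qed.

Definition fK (R : realType) n k (g : R) (j x : bits n) : R[i] :=
  \sum_u ad_kraus_n g j x u * dicke R k u.

Lemma rho_factor (R : realType) n k (g : R) x y :
  rho_nk n k g x y = \sum_j fK k g j x * cc (fK k g j y).
Proof.
rewrite /rho_nk /ad_channel_n /proj /fK.
apply: eq_bigr => j _.
rewrite /cc rmorph_sum big_distrl /=; apply: eq_bigr => u _.
rewrite big_distrr /=; apply: eq_bigr => v _; rewrite rmorphM /=; ring.
Qed.

Lemma K_support (R : realType) n (g : R) (j x u : bits n) :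
  ad_kraus_n g j x u != 0 -> forall i, x i -> u i.
Proof.
move=> H i xi; have := prod_neq0_each H i; rewrite /ad_kraus.
by case: (j i); rewrite /ad_K0 /ad_K1; move: xi; case: (x i); case: (u i) => //; rewrite eqxx.
Qed.

Lemma K_diag (R : realType) n (g : R) (j x : bits n) :
  ad_kraus_n g j x x != 0 -> j = zeros n.
Proof.
move=> H; apply/ffunP => i; rewrite /zeros ffunE; have := prod_neq0_each H i.
by case: (j i) => //; rewrite /ad_kraus /ad_K1; case: (x i); rewrite eqxx.
Qed.

Lemma K0_diag (R : realType) n (g : R) (x : bits n) :
  ad_kraus_n g (zeros n) x x = cR (Num.sqrt (1 - g)) ^+ hweight x.
Proof.
rewrite /ad_kraus_n /hweight.
under eq_bigr do rewrite /zeros ffunE /=.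
rewrite (bigID (fun i => x i)) /= [X in _ * X]big1 ?mulr1; last first.
  by move=> i /negPf ->.
rewrite (eq_bigr (fun _ => cR (Num.sqrt (1 - g)))); last by move=> i ->.
rewrite prodr_const; congr (_ ^+ _); apply: eq_card => i; by rewrite !inE.
Qed.

Definition acoef (R : realType) n k (g : R) : R[i] :=
  cR (Num.sqrt (1 - g)) ^+ k * cR (Num.sqrt ('C(n, k)%:R^-1)).

Lemma fK_value (R : realType) n k (g : R) (j x : bits n) :
  (k <= hweight x)%N ->
  fK k g j x = if (j == zeros n) && (hweight x == k) then acoef n k g else 0.
Proof.
move=> Hk; rewrite /fK (bigD1 x) //= big1 ?addr0; last first.
  move=> u Hux.
  case: (boolP (ad_kraus_n g j x u == 0)) => [/eqP->|HK]; first by rewrite mul0r.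
  rewrite /dicke; case: eqP => [Hu|]; last by rewrite mulr0.
  exfalso; move/negP: Hux; apply.
  have sub : [set i | x i] \subset [set i | u i].
    by apply/subsetP => i; rewrite !inE; exact: K_support HK i.
  have /eqP Heq : [set i | x i] == [set i | u i].
    by rewrite eqEcard sub /=; move: Hu; rewrite /hweight => ->.
  apply/eqP/ffunP => i.
  have : (i \in [set i | x i]) = (i \in [set i | u i]) by rewrite Heq.
  by rewrite !inE => ->.
case: (boolP (j == zeros n)) => [/eqP -> | Hj] /=.
  rewrite K0_diag /dicke /acoef; case: eqP => [-> //|_]; by rewrite mulr0.
have -> : ad_kraus_n g j x x = 0.
  by apply/eqP; apply: contraNT Hj => /K_diag ->.
by rewrite mul0r.
Qed.

Lemma rho_kk (R : realType) n k (g : R) (x y : bits n) :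
  hweight x = k -> hweight y = k ->
  rho_nk n k g x y = acoef n k g * cc (acoef n k g).
Proof.
move=> Hx Hy.
have hx : (k <= hweight x)%N by rewrite Hx.
have hy : (k <= hweight y)%N by rewrite Hy.
rewrite rho_factor (bigD1 (zeros n)) //= big1 ?addr0.
  by rewrite !fK_value // Hx Hy !eqxx.
by move=> j Hj; rewrite (fK_value _ _ hx) (negPf Hj) mul0r.
Qed.

Lemma rho_big (R : realType) n k (g : R) (z : bits n) :
  (k < hweight z)%N -> rho_nk n k g z z = 0.
Proof.
move=> Hz; rewrite rho_factor big1 // => j _.
by rewrite (fK_value _ _ (ltnW Hz)) (gtn_eqF Hz) andbF mul0r.
Qed.

Lemma cR_eq0 (R : realType) (r : R) : (cR r == 0) = (r == 0).
Proof. by rewrite /cR eq_complex /= eqxx andbT. Qed.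

Lemma K1_val (R : realType) n (j x u : bits n) :
  ad_kraus_n (1 : R) j x u = if (x == zeros n) && (u == j) then 1 else 0.
Proof.
rewrite /ad_kraus_n.
case: (boolP ((x == zeros n) && (u == j))) => [/andP [/eqP -> /eqP ->] | H].
  apply: big1 => i _; rewrite /zeros ffunE /ad_kraus.
  by case: (j i); rewrite /= ?sqrtr1.
have [i Hi] : exists i, (x i) || (u i != j i).
  case: (pickP (fun i => (x i) || (u i != j i))) => [i Hi | H0]; first by exists i.
  move/negP: H; case; apply/andP; split; apply/eqP/ffunP => i; rewrite ?/zeros ?ffunE;
    move: (H0 i) => /=; case: (x i); case: (u i); case: (j i) => //.
rewrite (bigD1 i) //=; move: Hi; rewrite /ad_kraus.
case: (x i); case: (u i); case: (j i) => //= _;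
  rewrite /ad_K0 /ad_K1 ?subrr ?sqrtr0 /cR ?mul0r //.
Qed.

Lemma card_weight n k :
  #|[set x : bits n | hweight x == k]| = 'C(n, k).
Proof.
have := card_draws ('I_n) k; rewrite card_ord => <-.
rewrite -!sum1dep_card.
rewrite (reindex (fun A : {set 'I_n} => [ffun i => i \in A])) /=.
  apply: eq_bigl => A; congr (_ == _); rewrite /hweight.
  by apply: eq_card => i; rewrite !inE ffunE.
exists (fun x : bits n => [set i | x i]) => A _.
  by apply/setP => i; rewrite inE ffunE.
by apply/ffunP => i; rewrite ffunE inE.
Qed.

Lemma rho_one (R : realType) n k : (k <= n)%N ->
  rho_nk n k (1 : R) = proj (basis_ket (zeros n)).
Proof.
move=> Hk; apply: functional_extensionality => x; apply: functional_extensionality => y.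
rewrite rho_factor.
have fE : forall j (z : bits n), fK k (1:R) j z = if z == zeros n then dicke R k j else 0.
  move=> j z; rewrite /fK; under eq_bigr do rewrite K1_val.
  case: (boolP (z == zeros n)) => Hz.
    under eq_bigr do rewrite /= mulrC.
    by rewrite sum_delta.
  by rewrite big1 // => u _; rewrite /= mul0r.
under eq_bigr do rewrite !fE.
have Cn0 : ('C(n, k)%:R : R) != 0 by rewrite pnatr_eq0 -lt0n bin_gt0.
have S : \sum_(j : bits n) dicke R k j * cc (dicke R k j) = 1.
  rewrite /dicke (bigID (fun j => hweight j == k)) /= [X in _ + X]big1 ?addr0; last first.
    by move=> j /negPf ->; rewrite mul0r.
  rewrite (eq_bigr (fun _ => cR (Num.sqrt ('C(n, k)%:R^-1)) * cc (cR (Num.sqrt ('C(n, k)%:R^-1))))); last first.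
    by move=> j ->.
  rewrite sumr_const.
  have -> : #|[pred j : bits n | hweight j == k]| = 'C(n, k).
    by rewrite -card_weight; apply: eq_card => j; rewrite !inE.
  change (cR (Num.sqrt ('C(n, k)%:R^-1))) with (real_complex R (Num.sqrt ('C(n, k)%:R^-1 : R))).
  rewrite /cc conjc_real -rmorphM -rmorphMn -expr2 sqr_sqrtr ?invr_ge0 ?ler0n //.
  by rewrite -mulr_natl mulfV // rmorph1.
rewrite /proj /basis_ket.
case: (boolP (x == zeros n)) => Hx; case: (boolP (y == zeros n)) => Hy.
- by rewrite S /cc conjc1 mulr1.
- by rewrite big1 /cc ?conjc0 ?mulr0 // => j _; rewrite mulr0.
- by rewrite big1 ?mul0r // => j _; rewrite mul0r.
- by rewrite big1 ?mul0r // => j _; rewrite mul0r.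
Qed.

Lemma clifford_id (R : realType) n : clifford (@op_id R n).
Proof.
have adj : op_adj (@op_id R n) = @op_id R n.
  apply: functional_extensionality => x; apply: functional_extensionality => y.
  rewrite /op_adj /op_id eq_sym; case: eqP => _; by rewrite /cc ?conjc1 ?conjc0.
have mr : forall A : op R n, op_mul A (@op_id R n) = A.
  move=> A; apply: functional_extensionality => x; apply: functional_extensionality => y.
  by rewrite /op_mul /op_id sum_delta.
have ml : forall A : op R n, op_mul (@op_id R n) A = A.
  move=> A; apply: functional_extensionality => x; apply: functional_extensionality => y.
  rewrite /op_mul /op_id; under eq_bigr do rewrite mulrC eq_sym.
  by rewrite sum_delta.
split; first by rewrite /unitary adj mr.
move=> p; exists p, (ord0 : 'I_4); rewrite adj mr ml.
apply: functional_extensionality => x; apply: functional_extensionality => y.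
by rewrite expr0 mul1r.
Qed.

Lemma card_prefix n m : (m <= n)%N -> #|[set i : 'I_n | (i < m)%N]| = m.
Proof.
move=> Hm; rewrite -sum1dep_card.
rewrite -(big_mkord (fun i => i < m)%N (fun _ => 1%N)).
rewrite -(big_nat_widen 0 m n (fun _ => true) (fun _ => 1%N)) //.
by rewrite sum_nat_const_nat muln1 subn0.
Qed.

Lemma hw_set n (A : {set 'I_n}) : hweight [ffun i => i \in A] = #|A|.
Proof. by rewrite /hweight; apply: eq_card => i; rewrite !inE ffunE. Qed.

Lemma psum_term0 (R : realType) m (w : 'I_m -> R) (F : 'I_m -> R[i]) :
  (forall j, 0 <= w j) ->
  \sum_j cR (w j) * (F j * cc (F j)) = 0 ->
  forall j, w j != 0 -> F j = 0.
Proof.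
move=> Hw S j Hj.
have H0 : forall j, predT j -> 0 <= cR (w j) * (F j * cc (F j)).
  by move=> i _; apply: mulr_ge0; [rewrite /cR ler0c | exact: mulcJ_ge0].
have := psumr_eq0P H0 S (i := j) isT.
move=> /eqP; rewrite mulf_eq0 cR_eq0 (negPf Hj) /= mulf_eq0 /cc conjc_eq0 orbb.
by move/eqP.
Qed.

Theorem propositionS1 (R : realType) (n k : nat) :
  (4 <= n)%N -> (2 <= k)%N -> (k <= n - 2)%N ->
  (forall g : R, 0 <= g -> g < 1 -> ~ stab_polytope (rho_nk n k g))
  /\ rho_nk n k (1 : R) = proj (basis_ket (zeros n))
  /\ stab_polytope (rho_nk n k (1 : R)).
Proof.
move=> H4 H2 Hkn.
have Hk : (k <= n)%N by lia.
split; last first.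
  split; first exact: rho_one.
  rewrite rho_one //.
  exists 1%N, (fun _ => 1), (fun _ => @op_id R n).
  split; first by [].
  split; first by rewrite big_ord1.
  split; first by move=> _; apply: clifford_id.
  apply: functional_extensionality => x; apply: functional_extensionality => y.
  rewrite big_ord1; have -> : cR (1:R) = 1 by [].
  by rewrite mul1r.
move=> g g0 g1 [m [w [U [Hw [Hsum [HU Hrho]]]]]].
have rhoE : forall x y, rho_nk n k g x y = \sum_j cR (w j) * proj (stab_ket (U j)) x y.
  by move=> x y; rewrite Hrho.
pose T := [set i : 'I_n | (i < k.-1)%N].
pose Z := [set i : 'I_n | (i < k)%N].
have Hn1 : (n - 1 < n)%N by lia.
have Hn2 : (n - 2 < n)%N by lia.
pose i1 := Ordinal Hn1; pose i2 := Ordinal Hn2.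
pose xb : bits n := [ffun i => i \in i1 |: T].
pose yb : bits n := [ffun i => i \in i2 |: T].
pose zb : bits n := [ffun i => i \in Z].
pose wb : bits n := [ffun i => i \in i1 |: (i2 |: Z)].
have cT : #|T| = k.-1 by rewrite card_prefix //; lia.
have cZ : #|Z| = k by rewrite card_prefix.
have hx : hweight xb = k.
  rewrite hw_set cardsU1 cT.
  have -> : (i1 \in T) = false by rewrite inE /=; apply/negbTE; rewrite -leqNgt; lia.
  simpl; lia.
have hy : hweight yb = k.
  rewrite hw_set cardsU1 cT.
  have -> : (i2 \in T) = false by rewrite inE /=; apply/negbTE; rewrite -leqNgt; lia.
  simpl; lia.
have hz : hweight zb = k by rewrite hw_set.
have hw : (k < hweight wb)%N.
  rewrite hw_set cardsU1 cardsU1 cZ.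
  have -> : (i2 \in Z) = false by rewrite inE /=; apply/negbTE; rewrite -leqNgt; lia.
  have -> : (i1 \in i2 |: Z) = false.
    rewrite !inE -val_eqE /=; apply/negbTE; rewrite negb_or; apply/andP; split; lia.
  simpl; lia.
have sw : forall j, w j != 0 -> stab_ket (U j) wb = 0.
  apply: (psum_term0 Hw); have E := @rho_big R n k g wb hw.
  by rewrite rhoE in E; exact: E.
have an0 : acoef n k g != 0.
  rewrite /acoef mulf_neq0 // ?expf_neq0 // cR_eq0 sqrtr_eq0 -ltNge.
    by rewrite subr_gt0.
  by rewrite invr_gt0 ltr0n bin_gt0.
have eqk : forall j p, hweight p = k -> w j != 0 ->
    stab_ket (U j) p = stab_ket (U j) xb.
  move=> j p hp Hj.
  have E : \sum_i cR (w i) * ((stab_ket (U i) xb - stab_ket (U i) p) *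
                 cc (stab_ket (U i) xb - stab_ket (U i) p)) =
      rho_nk n k g xb xb - rho_nk n k g xb p - rho_nk n k g p xb + rho_nk n k g p p.
    rewrite !rhoE -!sumrB -big_split /=; apply: eq_bigr => i _.
    rewrite /proj /cc rmorphB /=; ring.
  rewrite !rho_kk // subrr sub0r addNr in E.
  have := psum_term0 Hw E Hj.
  by move/eqP; rewrite subr_eq0 => /eqP.
have : rho_nk n k g xb xb != 0.
  by rewrite rho_kk // mulf_neq0 // /cc conjc_eq0.
rewrite rhoE => /sum_neq0_ex [j]; rewrite mulf_eq0 negb_or cR_eq0 => /andP [Hwj].
rewrite /proj mulf_eq0 negb_or => /andP [sx _].
have sy : stab_ket (U j) yb != 0 by rewrite eqk.
have sz : stab_ket (U j) zb != 0 by rewrite eqk.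
have := stab_contra (HU j) sx sy sz.
have -> : [ffun i => zb i (+) xb i (+) yb i] = wb.
  apply/ffunP => i; rewrite !ffunE !inE -!val_eqE /=.
  move: (ltn_ord i).
  move Ha: (nat_of_ord i < k.-1)%N => a; move Hb: (nat_of_ord i < k)%N => b.
  move Hc: (nat_of_ord i == n - 1)%N => c; move Hd: (nat_of_ord i == n - 2)%N => d.
  by case: a b c d Ha Hb Hc Hd => [] [] [] [] Ha Hb Hc Hd //= _; exfalso; lia.
by rewrite sw // eqxx.
Qed.
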